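(* Let $D$ be a Dyck path of length $2n$. There is a bijection $\kappa$ from the set of columns of $S(D)$ that are below a step $\nearrow$ to the set of odd columns of $S(D)$ such that, for every such column $c$, $c$ and $\kappa(c)$ contain the same number of cells.
   Context: A Dyck path of length $2m$ is a lattice path from $(0,0)$ to $(2m,0)$ with steps $\nearrow=(1,1)$, $\searrow=(1,-1)$ never going below the $x$-axis; $P(x)$ denotes its height at abscissa $x$. A cell is a point $(a,b)\in\mathbb{Z}^2$ with $b\ge0$, $a+b$ even (the tilted square with vertices $(a,b),(a+1,b\pm1),(a+2,b)$). The Dyck shape of $P$ (length $2m$) is $S(P)=\{(a,b): b\ge0,\ a+b\text{ even},\ 0\le a\le 2m-2,\ b+1\le P(a+1)\}$. For $0\le a\le 2m-2$, the column $a$ of $S(P)$ (which is the $(a+1)$-st column counting from $1$) is the set of cells of $S(P)$ with first coordinate $a$. It is below a step $\nearrow$ if the $(a+1)$-st step of $P$ is $\nearrow$. It is an odd column if $a+1$ is odd, i.e. $a$ is even. *)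

(* Defs.v *)
From mathcomp Require Import all_boot.
Set Implicit Arguments. Unset Strict Implicit. Unset Printing Implicit Defensive.

(* A lattice path is a sequence of steps: true = NE step (1,1), false = SE step (1,-1). *)
Definition nups (s : seq bool) : nat := count id s.
Definition ndowns (s : seq bool) : nat := count negb s.

(* Height P(x) of the path at abscissa x (truncated subtraction is exact on
   Dyck paths, where ups >= downs on every prefix). *)
Definition height (P : seq bool) (x : nat) : nat :=
  nups (take x P) - ndowns (take x P).

Definition dyck (m : nat) (P : seq bool) : Prop :=
  [/\ size P = m.*2,
      (forall x, ndowns (take x P) <= nups (take x P)) &
      nups P = ndowns P].

Definition in_shape (m : nat) (P : seq bool) (c : nat * nat) : bool :=
  [&& ~~ odd (c.1 + c.2), c.1 <= m.*2 - 2 & c.2 + 1 <= height P c.1.+1].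

(* Column a of S(P): its cells (a,b).  Every cell of S(P) has b < size P,
   since heights are bounded by the length, so enumerating b < size P is exhaustive. *)
Definition column (m : nat) (P : seq bool) (a : nat) : seq (nat * nat) :=
  [seq c <- [seq (a, b) | b <- iota 0 (size P)] | in_shape m P c].

Definition columns (m : nat) : seq nat := iota 0 (m.*2).-1.

(* Columns below a NE step: the (a+1)-st step (index a) is NE. *)
Definition up_columns (m : nat) (P : seq bool) : seq nat :=
  [seq a <- columns m | nth false P a].

(* Odd columns: a+1 odd, i.e. a even. *)
Definition odd_columns (m : nat) : seq nat :=
  [seq a <- columns m | ~~ odd a].

(* Main.v *)
Require Import Defs.
From mathcomp Require Import all_boot.
From mathcomp Require Import zify.
Set Implicit Arguments. Unset Strict Implicit. Unset Printing Implicit Defensive.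
Lemma biject (f : nat -> nat) (s t : seq nat) : uniq s -> uniq t ->
  (forall v, count (fun a => f a == v) s = count (fun a => f a == v) t) ->
  exists kappa : nat -> nat,
    [/\ {in s, forall c, kappa c \in t}, {in s &, injective kappa},
        {in t, forall d, exists2 c, c \in s & kappa c = d} &
        {in s, forall c, f (kappa c) = f c}].
Proof.
elim: s t => [|x s IH] t us ut hc.
  exists id; split => // d dt; exfalso.
  have : 0 < count (fun a => f a == f d) t by rewrite -has_count; apply/hasP; exists d.
  by rewrite -hc.
move: us => /= /andP [xs us].
have : has (fun a => f a == f x) t by rewrite has_count -hc /= eqxx.
case/hasP => y yt /eqP fy.
have pt := perm_to_rem yt.
have ut' : uniq (rem y t) by exact: rem_uniq.
have hc' : forall v, count (fun a => f a == v) s = count (fun a => f a == v) (rem y t).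
  move=> v; have := hc v; rewrite (permP pt) /= fy.
  by move/eqP; rewrite eqn_add2l => /eqP.
have [k [k1 k2 k3 k4]] := IH _ us ut' hc'.
have memr := mem_rem_uniq y ut.
exists (fun z => if z == x then y else k z); split.
- move=> c; rewrite inE; case: eqP => [_ _|_ /= cs] //.
  by have := k1 c cs; rewrite memr /= => /andP [].
- move=> a b; rewrite !inE.
  case: (eqVneq a x) => [->|ax]; case: (eqVneq b x) => [->|bx] //= ha hb.
  + by move=> e; have := k1 b hb; rewrite memr !inE -e eqxx.
  + by move=> e; have := k1 a ha; rewrite memr !inE e eqxx.
  + exact: k2.
- move=> d dt; case: (eqVneq d y) => [->|dy]; first by exists x; rewrite ?inE ?eqxx.
  have : d \in rem y t by rewrite memr !inE dy.
  case/k3 => c cs <-; exists c; first by rewrite inE cs orbT.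
  by case: eqP => // cx; move: xs; rewrite -cx cs.
- move=> c; rewrite inE; case: eqP => [->|_ /= cs] //.
  exact: k4.
Qed.

Lemma ud_size (D : seq bool) x : x <= size D ->
  nups (take x D) + ndowns (take x D) = x.
Proof.
move=> hx; rewrite /nups /ndowns.
have -> : count negb (take x D) = count (predC id) (take x D) by [].
by rewrite count_predC size_take; case: ltnP => // ?; lia.
Qed.

Lemma u_step (D : seq bool) x : x < size D ->
  nups (take x.+1 D) = nups (take x D) + nth false D x /\
  ndowns (take x.+1 D) = ndowns (take x D) + ~~ nth false D x.
Proof.
move=> hx; rewrite (take_nth false hx) /nups /ndowns -cats1 !count_cat /=.
by rewrite !addn0.
Qed.

Lemma count_par a N H :
  count (fun b => ~~ odd (a + b) && (b + 1 <= H)) (iota 0 N) = (minn N H + ~~ odd a)./2.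
Proof.
elim: N => [|N IH]; first by rewrite /=; lia.
rewrite -[N.+1]addn1 iotaD count_cat IH /= add0n addn0.
case: (odd a) (odd (a + N)) (leqP (N + 1) H) (oddD a N) => [] [] /= h //; lia.
Qed.

Lemma height_par n D x : dyck n D -> x <= size D ->
  odd (height D x) = odd x /\ height D x <= x.
Proof.
case=> _ hle _ hx; have := ud_size hx; have := hle x.
rewrite /height; lia.
Qed.

Lemma col_size n D a : dyck n D -> a < (n.*2).-1 ->
  size (column n D a) = uphalf (height D a.+1).
Proof.
move=> hd ha; have [hs _ _] := hd.
rewrite /column size_filter count_map.
rewrite (@eq_count _ _ (fun b => ~~ odd (a + b) && (b + 1 <= height D a.+1))); last first.
  move=> b /=; rewrite /in_shape /=.
  have -> : a <= n.*2 - 2 by lia.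
  by [].
rewrite count_par.
have [hp hl] := @height_par n D a.+1 hd (ltac:(lia) : a.+1 <= size D).
lia.
Qed.

Lemma invariant n D v x : dyck n D -> x <= size D -> 0 < v ->
  count (fun a => nth false D a && (uphalf (height D a.+1) == v)) (iota 0 x) =
  count (fun a => ~~ odd a && (uphalf (height D a.+1) == v)) (iota 0 x)
  + (v.*2 <= height D x).
Proof.
move=> hd; have [hs hle heq] := hd.
elim: x => [|x IH] hx hv; first by rewrite /= /height take0 /=; lia.
have hx2 : x <= size D by lia.
rewrite -[x.+1]addn1 iotaD !count_cat IH //.
rewrite /= add0n !addn0 addn1.
have [e1 e2] := u_step (ltac:(lia) : x < size D).
have := ud_size (ltac:(lia) : x <= size D).
have := hle x.+1; have := hle x.
rewrite /height e1 e2.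
set C := count _ _; case: (nth false D x) => /=; lia.
Qed.

Lemma key n D v (P : pred nat) : dyck n D ->
  count (fun a => size (column n D a) == v) [seq a <- columns n | P a] =
  count (fun a => P a && (uphalf (height D a.+1) == v)) (iota 0 (n.*2).-1).
Proof.
move=> hd; rewrite count_filter; apply: eq_in_count => a; rewrite mem_iota => ha /=.
rewrite (col_size hd) 1?andbC //; lia.
Qed.

Lemma last_height n D : dyck n D -> height D (n.*2).-1 <= 1.
Proof.
move=> hd; have [hs hle heq] := hd.
case: n hd hs heq => [|n] hd hs heq; first by rewrite /height /= take0.
have hx : (n.+1).*2.-1 < size D by rewrite hs; lia.
have [e1 e2] := u_step hx.
have := ud_size (ltnW hx); have := hle (n.+1).*2.-1.
have hsz : (n.+1).*2.-1.+1 = size D by rewrite hs; lia.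
rewrite hsz take_size in e1 e2.
rewrite /height; case: (nth false D _) e1 e2 => /= e1 e2; lia.
Qed.

Lemma counts_eq n D v : dyck n D ->
  count (fun a => size (column n D a) == v) (up_columns n D) =
  count (fun a => size (column n D a) == v) (odd_columns n).
Proof.
move=> hd; have [hs hle heq] := hd.
rewrite /up_columns /odd_columns !key //.
case: v => [|v].
  rewrite !(@eq_in_count _ _ pred0) ?count_pred0 // => a; rewrite mem_iota => ha /=.
  + have [hp _] := @height_par n D a.+1 hd ltac:(lia).
    apply/negP => /andP [h1 /eqP h2]; move: hp h1 h2; lia.
  + have hx : a < size D by lia.
    have [e1 e2] := u_step hx; have := hle a.
    move=> hl; apply/negP => /andP [h1 /eqP h2]; move: hl h1 h2; rewrite /height e1 e2.
    case: (nth false D a) => //=; lia.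
have hx : (n.*2).-1 <= size D by rewrite hs; lia.
rewrite (@invariant n D v.+1 (n.*2).-1 hd hx) //.
have := last_height hd; set C := count _ _; lia.

Qed.

Theorem mainTheorem9 (n : nat) (D : seq bool) :
  dyck n D ->
  exists kappa : nat -> nat,
    [/\ {in up_columns n D, forall c, kappa c \in odd_columns n},
        {in up_columns n D &, injective kappa},
        {in odd_columns n, forall d, exists2 c, c \in up_columns n D & kappa c = d} &
        {in up_columns n D, forall c,
            size (column n D (kappa c)) = size (column n D c)}].
Proof.
move=> hd.
apply: (@biject (fun a => size (column n D a))).
- by rewrite /up_columns filter_uniq // iota_uniq.
- by rewrite /odd_columns filter_uniq // iota_uniq.
- by move=> v; exact: counts_eq.
Qed.
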